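(* Let $M$ be a multiplication $L$-module and define $\delta_2:M\to M$ by $\delta_2(A)=\bigwedge\{H\in M: A\leqslant H,\ H\text{ maximal in }M\}$ for proper $A\in M$ and $\delta_2(I_M)=I_M$. Then $\delta_2(A\wedge B)=\delta_2(A)\wedge\delta_2(B)$ for all $A,B\in M$.
   Context: $L$ is a multiplicative lattice (complete lattice with commutative, associative, join-distributive multiplication with identity $1$), compactly generated, $1$ compact, finite products of compact elements compact. An $L$-module is a complete lattice $M$ (least $O_M$, greatest $I_M$) with product $aB\in M$ satisfying $(\bigvee a_\alpha)A=\bigvee(a_\alpha A)$, $a(\bigvee A_\alpha)=\bigvee(aA_\alpha)$, $(ab)A=a(bA)$, $1A=A$, $0A=O_M$. $M$ is a multiplication module if every $N\in M$ equals $aI_M$ for some $a\in L$. Proper means $<I_M$; a proper $N$ is maximal if $N\leqslant B$ implies $B=N$ or $B=I_M$. The meet of the empty family is $I_M$. *)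

(* Defs.v *)
From Stdlib Require Import List ClassicalEpsilon.

Record cLattice := CLattice {
  cl_car :> Type;
  cl_le : cl_car -> cl_car -> Prop;
  cl_sup : (cl_car -> Prop) -> cl_car;
  cl_le_refl : forall x, cl_le x x;
  cl_le_trans : forall x y z, cl_le x y -> cl_le y z -> cl_le x z;
  cl_le_antisym : forall x y, cl_le x y -> cl_le y x -> x = y;
  cl_sup_ub : forall (S : cl_car -> Prop) x, S x -> cl_le x (cl_sup S);
  cl_sup_least : forall (S : cl_car -> Prop) y,
      (forall x, S x -> cl_le x y) -> cl_le (cl_sup S) y
}.

Arguments cl_le {c}.
Arguments cl_sup {c}.

Section LatOps.
Variable X : cLattice.
Definition cl_inf (S : X -> Prop) : X :=
  cl_sup (fun x => forall y, S y -> cl_le x y).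
Definition cl_bot : X := cl_sup (fun _ => False).
Definition cl_top : X := cl_sup (fun _ => True).
Definition cl_meet (a b : X) : X := cl_inf (fun y => y = a \/ y = b).
Definition cl_join (a b : X) : X := cl_sup (fun y => y = a \/ y = b).
End LatOps.

Arguments cl_inf {X}.
Arguments cl_bot {X}.
Arguments cl_top {X}.
Arguments cl_meet {X}.
Arguments cl_join {X}.

Definition compact {X : cLattice} (c : X) : Prop :=
  forall S : X -> Prop, cl_le c (cl_sup S) ->
    exists l : list X, (forall x, In x l -> S x) /\
                       cl_le c (cl_sup (fun x => In x l)).

(* Multiplicative lattice: 1 is the greatest element and the multiplicative
   identity (standard convention, Dilworth/Anderson). *)
Record mLattice := MLattice {
  ml_lat :> cLattice;
  ml_mul : ml_lat -> ml_lat -> ml_lat;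
  ml_one : ml_lat;
  ml_one_top : ml_one = cl_top;
  ml_mulC : forall a b, ml_mul a b = ml_mul b a;
  ml_mulA : forall a b c, ml_mul a (ml_mul b c) = ml_mul (ml_mul a b) c;
  ml_mul1 : forall a, ml_mul a ml_one = a;
  ml_mul_sup : forall a (S : ml_lat -> Prop),
      ml_mul a (cl_sup S) = cl_sup (fun y => exists s, S s /\ y = ml_mul a s);
  ml_compactly_generated : forall a : ml_lat,
      a = cl_sup (fun c => compact c /\ cl_le c a);
  ml_one_compact : compact ml_one;
  ml_mul_compact : forall a b, compact a -> compact b -> compact (ml_mul a b)
}.

Arguments ml_mul {m}.
Arguments ml_one {m}.

Record lModule (L : mLattice) := LModule {
  md_lat :> cLattice;
  md_act : L -> md_lat -> md_lat;
  md_act_supl : forall (S : L -> Prop) (A : md_lat),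
      md_act (cl_sup S) A = cl_sup (fun y => exists a, S a /\ y = md_act a A);
  md_act_supr : forall (a : L) (S : md_lat -> Prop),
      md_act a (cl_sup S) = cl_sup (fun y => exists B, S B /\ y = md_act a B);
  md_act_mul : forall (a b : L) (A : md_lat),
      md_act (ml_mul a b) A = md_act a (md_act b A);
  md_act_one : forall A : md_lat, md_act ml_one A = A;
  md_act_zero : forall A : md_lat, md_act cl_bot A = cl_bot
}.

Arguments md_act {L l}.

Definition multiplication_module {L : mLattice} (M : lModule L) : Prop :=
  forall N : M, exists a : L, N = md_act a cl_top.

Definition proper {X : cLattice} (N : X) : Prop := N <> cl_top.

Definition maximal {X : cLattice} (N : X) : Prop :=
  proper N /\ forall B : X, cl_le N B -> B = N \/ B = cl_top.

Definition delta2 {X : cLattice} (A : X) : X :=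
  if excluded_middle_informative (A = cl_top) then cl_top
  else cl_inf (fun H => cl_le A H /\ maximal H).

(* Main.v *)
Require Import Defs.
From Stdlib Require Import Classical ClassicalEpsilon.

Section Lat.
Variable X : cLattice.
Lemma inf_lb (S : X -> Prop) y : S y -> cl_le (cl_inf S) y.
Proof. intro Hy. apply cl_sup_least. intros x Hx. apply Hx, Hy. Qed.
Lemma inf_glb (S : X -> Prop) x : (forall y, S y -> cl_le x y) -> cl_le x (cl_inf S).
Proof. intro H. apply (cl_sup_ub X (fun x => forall y, S y -> cl_le x y)), H. Qed.
Lemma meet_l (a b : X) : cl_le (cl_meet a b) a.
Proof. apply inf_lb; auto. Qed.
Lemma meet_r (a b : X) : cl_le (cl_meet a b) b.
Proof. apply inf_lb; auto. Qed.
Lemma meet_glb (a b x : X) : cl_le x a -> cl_le x b -> cl_le x (cl_meet a b).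
Proof. intros. apply inf_glb. intros y [->| ->]; auto. Qed.
Lemma le_top (x : X) : cl_le x cl_top.
Proof. apply (cl_sup_ub X (fun _ => True)); exact I. Qed.
Lemma join_l (a b : X) : cl_le a (cl_join a b).
Proof. apply (cl_sup_ub X (fun y => y = a \/ y = b)); auto. Qed.
Lemma join_r (a b : X) : cl_le b (cl_join a b).
Proof. apply (cl_sup_ub X (fun y => y = a \/ y = b)); auto. Qed.
Lemma meet_top_l (x : X) : cl_meet cl_top x = x.
Proof. apply cl_le_antisym. apply meet_r. apply meet_glb. apply le_top. apply cl_le_refl. Qed.
Lemma meet_top_r (x : X) : cl_meet x cl_top = x.
Proof. apply cl_le_antisym. apply meet_l. apply meet_glb. apply cl_le_refl. apply le_top. Qed.
Lemma delta2_top : delta2 (@cl_top X) = cl_top.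
Proof. unfold delta2. destruct (excluded_middle_informative _); congruence. Qed.
End Lat.

Section Mod.
Variable L : mLattice.
Variable M : lModule L.

Lemma act_mono_r (a : L) (A B : M) : cl_le A B -> cl_le (md_act a A) (md_act a B).
Proof.
  intro HAB.
  assert (E : B = cl_sup (fun y => cl_le y B)).
  { apply cl_le_antisym. apply (cl_sup_ub _ (fun y => cl_le y B)), cl_le_refl.
    apply cl_sup_least; auto. }
  rewrite E, md_act_supr. apply (cl_sup_ub _ (fun y => exists C, cl_le C B /\ y = md_act a C)).
  eauto.
Qed.

Lemma act_mono_l (a b : L) (A : M) : cl_le a b -> cl_le (md_act a A) (md_act b A).
Proof.
  intro Hab.
  assert (E : b = cl_sup (fun y => cl_le y b)).
  { apply cl_le_antisym. apply (cl_sup_ub _ (fun y => cl_le y b)), cl_le_refl.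
    apply cl_sup_least; auto. }
  rewrite E, md_act_supl. apply (cl_sup_ub _ (fun y => exists c, cl_le c b /\ y = md_act c A)).
  eauto.
Qed.

Lemma prime_max (mm : multiplication_module M) (H A B : M) :
  maximal H -> cl_le (cl_meet A B) H -> cl_le A H \/ cl_le B H.
Proof.
  intros [Hp Hm] HAB.
  destruct (classic (cl_le A H)) as [h|nA]; [left; exact h| right].
  assert (J : cl_join A H = cl_top).
  { destruct (Hm (cl_join A H) (join_r _ _ _)) as [e|e]; auto.
    exfalso; apply nA; rewrite <- e; apply join_l. }
  destruct (mm A) as [a Ea]. destruct (mm B) as [b Eb].
  assert (bA : cl_le (md_act b A) H).
  { eapply cl_le_trans; [|exact HAB]. apply meet_glb.
    - rewrite Ea at 1. rewrite <- md_act_mul, ml_mulC, md_act_mul.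
      rewrite Ea. apply act_mono_r. rewrite <- Eb. apply le_top.
    - rewrite Eb. apply act_mono_r. apply le_top. }
  rewrite Eb, <- J. unfold cl_join. rewrite md_act_supr.
  apply cl_sup_least. intros y [C [[-> | ->] ->]].
  - exact bA.
  - eapply cl_le_trans. apply (act_mono_l b ml_one). rewrite ml_one_top. apply le_top.
    rewrite md_act_one. apply cl_le_refl.
Qed.
End Mod.

Theorem theorem3p7 (L : mLattice) (M : lModule L) :
  multiplication_module M ->
  forall A B : M, delta2 (cl_meet A B) = cl_meet (delta2 A) (delta2 B).
Proof.
  intros mm A B.
  destruct (classic (A = cl_top)) as [-> | nA].
  { rewrite meet_top_l, delta2_top, meet_top_l. reflexivity. }
  destruct (classic (B = cl_top)) as [-> | nB].
  { rewrite meet_top_r, delta2_top, meet_top_r. reflexivity. }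
  assert (nAB : cl_meet A B <> cl_top).
  { intro e. apply nA. apply cl_le_antisym. apply le_top. rewrite <- e. apply meet_l. }
  unfold delta2.
  destruct (excluded_middle_informative (cl_meet A B = cl_top)); [contradiction|].
  destruct (excluded_middle_informative (A = cl_top)); [contradiction|].
  destruct (excluded_middle_informative (B = cl_top)); [contradiction|].
  apply cl_le_antisym.
  - apply meet_glb; apply inf_glb; intros y [Hy My]; apply inf_lb; split; auto;
      eapply cl_le_trans; [apply meet_l| |apply meet_r|]; exact Hy.
  - apply inf_glb. intros y [Hy My].
    destruct (prime_max L M mm y A B My Hy) as [h|h].
    + eapply cl_le_trans. apply meet_l. apply inf_lb. auto.
    + eapply cl_le_trans. apply meet_r. apply inf_lb. auto.
Qed.
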